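(* Let $E$ be a closed subset of $\mathbb{R}^n$ and let $k \ge 1$ be such that every two points $x, y \in E$ can be connected by a rectifiable path contained in $E$ whose length is at most $k\,|x-y|$. Let $A$ be a continuous function on $E$ whose values $A(x)$ are linear mappings from $\mathbb{R}^n$ to $\mathbb{R}$, and let $f : E \to \mathbb{R}$ be locally Lipschitz. Suppose that for every interval $I \subseteq \mathbb{R}$ and every locally Lipschitz map $p : I \to E$, the derivative of $t \mapsto f(p(t))$ equals $A(p(t))(p'(t))$ for almost every $t \in I$. Then for every $x, y \in E$, $$|f(y) - f(x) - A(x)(y-x)| \le k\,|x-y|\,\sup\{\,|A(w) - A(x)| : w \in E,\ |x-w| \le k\,|x-y|\,\}.$$
   Context: $|\cdot|$ denotes the Euclidean norm on $\mathbb{R}^n$; for linear maps $B : \mathbb{R}^n \to \mathbb{R}$, $|B|$ denotes the operator norm (equivalently, the Euclidean norm of the vector representing $B$ via the standard inner product). *)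

(* Defs.v *)
From HB Require Import structures.
From mathcomp Require Import all_boot all_order all_algebra.
From mathcomp Require Import all_classical all_reals all_analysis.
Set Implicit Arguments. Unset Strict Implicit. Unset Printing Implicit Defensive.
Import Order.TTheory GRing.Theory Num.Theory.
Import numFieldNormedType.Exports.
Local Open Scope classical_set_scope.
Local Open Scope ring_scope.

Section Defs.
Variables (R : realType) (n : nat).

Definition enorm (v : 'rV[R]_n) : R := Num.sqrt (\sum_(i < n) v 0 i ^+ 2).

(* standard inner product; a linear map R^n -> R is represented by the
   vector B with B(v) = dotv B v, and its operator norm is enorm B *)
Definition dotv (u v : 'rV[R]_n) : R := \sum_(i < n) u 0 i * v 0 i.

Fixpoint poly_len (g : R -> 'rV[R]_n) (a : R) (s : seq R) : R :=
  match s with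
  | [::] => 0
  | t :: s' => enorm (g t - g a) + poly_len g t s'
  end.

Definition path_length (g : R -> 'rV[R]_n) (a b : R) : \bar R :=
  ereal_sup [set (poly_len g a s)%:E | s in [set s | itv_partition a b s]].

Definition cont_on_itv (g : R -> 'rV[R]_n) (a b : R) : Prop :=
  forall t, a <= t <= b -> forall eps : R, 0 < eps ->
    exists2 d : R, 0 < d & forall s, a <= s <= b -> `|s - t| < d ->
      enorm (g s - g t) < eps.

Definition joined_by_path (E : set 'rV[R]_n) (x y : 'rV[R]_n) (L : R) : Prop :=
  exists a b : R, exists g : R -> 'rV[R]_n,
    [/\ a <= b, g a = x, g b = y /\
        (forall t, a <= t <= b -> E (g t)),
        cont_on_itv g a b &
        (path_length g a b <= L%:E)%E].

Definition cont_on (E : set 'rV[R]_n) (A : 'rV[R]_n -> 'rV[R]_n) : Prop :=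
  forall x, E x -> forall eps : R, 0 < eps ->
    exists2 d : R, 0 < d & forall w, E w -> enorm (w - x) < d ->
      enorm (A w - A x) < eps.

Definition loc_lipschitz_on (E : set 'rV[R]_n) (f : 'rV[R]_n -> R) : Prop :=
  forall x, E x -> exists2 d : R, 0 < d & exists L : R,
    forall u v, E u -> E v -> enorm (u - x) < d -> enorm (v - x) < d ->
      `|f u - f v| <= L * enorm (u - v).

Definition loc_lipschitz_path (I : set R) (p : R -> 'rV[R]_n) : Prop :=
  forall t, I t -> exists2 d : R, 0 < d & exists L : R,
    forall s u, I s -> I u -> `|s - t| < d -> `|u - t| < d ->
      enorm (p s - p u) <= L * `|s - u|.

End Defs.

(* Main.v *)
Require Import Defs.
From HB Require Import structures.
From mathcomp Require Import all_boot all_order all_algebra.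
From mathcomp Require Import all_classical all_reals all_analysis.
From mathcomp Require Import ring lra.
Import Order.TTheory GRing.Theory Num.Theory.
Import numFieldNormedType.Exports.
Local Open Scope classical_set_scope.
Local Open Scope ring_scope.

Set Implicit Arguments. Unset Strict Implicit.


Section Enorm.
Variables (R : realType) (n : nat).
Implicit Types u v w : 'rV[R]_n.

Lemma sumsq_ge0 v : 0 <= \sum_(i < n) v 0 i ^+ 2.
Proof. by apply: sumr_ge0 => i _; exact: sqr_ge0. Qed.

Lemma enorm_ge0 v : 0 <= enorm v.
Proof. exact: sqrtr_ge0. Qed.

Lemma enorm_sq v : enorm v ^+ 2 = \sum_(i < n) v 0 i ^+ 2.
Proof. by rewrite /enorm sqr_sqrtr // sumsq_ge0. Qed.

Lemma dotvC u v : dotv u v = dotv v u.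
Proof. by apply: eq_bigr => i _; rewrite mulrC. Qed.

Lemma dotvBr u v w : dotv u (v - w) = dotv u v - dotv u w.
Proof.
rewrite /dotv -sumrB; apply: eq_bigr => i _; rewrite !mxE; ring.
Qed.

Lemma dotvDr u v w : dotv u (v + w) = dotv u v + dotv u w.
Proof.
rewrite /dotv -big_split; apply: eq_bigr => i _ /=; by rewrite !mxE mulrDr.
Qed.

Lemma dotvBl u v w : dotv (u - w) v = dotv u v - dotv w v.
Proof. by rewrite dotvC dotvBr ![dotv v _]dotvC. Qed.

Lemma dotvZr u (c : R) v : dotv u (c *: v) = c * dotv u v.
Proof.
rewrite /dotv mulr_sumr; apply: eq_bigr => i _; rewrite !mxE; ring.
Qed.

Lemma dotvv v : dotv v v = enorm v ^+ 2.
Proof. by rewrite enorm_sq; apply: eq_bigr => i _; rewrite expr2. Qed.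

Lemma CS2 u v : dotv u v ^+ 2 <= enorm u ^+ 2 * enorm v ^+ 2.
Proof.
rewrite !enorm_sq.
set a := \sum_(i < n) u 0 i ^+ 2; set b := \sum_(i < n) v 0 i ^+ 2.
set c := dotv u v.
have a0 : 0 <= a by exact: sumsq_ge0.
have H : 0 <= \sum_(i < n) (a * v 0 i - c * u 0 i) ^+ 2.
  by apply: sumr_ge0 => i _; exact: sqr_ge0.
have E : \sum_(i < n) (a * v 0 i - c * u 0 i) ^+ 2 = a * (a * b - c ^+ 2).
  have -> : \sum_(i < n) (a * v 0 i - c * u 0 i) ^+ 2 =
     \sum_(i < n) (a ^+ 2 * v 0 i ^+ 2) - \sum_(i < n) (2 * a * c * (u 0 i * v 0 i))
     + \sum_(i < n) (c ^+ 2 * u 0 i ^+ 2).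
    by rewrite -sumrB -big_split; apply: eq_bigr => i _ /=; ring.
  rewrite -!mulr_sumr -/a -/b -/c.
  have -> : \sum_(i < n) (u 0 i * v 0 i) = c by [].
  ring.
rewrite E in H.
have [a_gt0|] := ltrP 0 a.
  by rewrite pmulr_rge0 // subr_ge0 in H.
move=> ale0; have a00 : a = 0 by apply/eqP; rewrite eq_le ale0 a0.
have u0 : forall i, u 0 i = 0.
  move=> i; apply/eqP; rewrite -sqrf_eq0; apply/eqP.
  apply/eqP; rewrite eq_le sqr_ge0 andbT -a00 /a.
  rewrite (bigD1 i) //= lerDl; apply: sumr_ge0 => j _; exact: sqr_ge0.
have -> : c = 0 by rewrite /c /dotv big1 // => i _; rewrite u0 mul0r.
by rewrite a00 expr0n /= mul0r.
Qed.

Lemma CS u v : `|dotv u v| <= enorm u * enorm v.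
Proof.
rewrite -ler_sqr ?nnegrE ?mulr_ge0 ?enorm_ge0 //.
by rewrite real_normK ?num_real // exprMn CS2.
Qed.

Lemma enormD u v : enorm (u + v) <= enorm u + enorm v.
Proof.
rewrite -ler_sqr ?nnegrE ?addr_ge0 ?enorm_ge0 //.
have e : enorm (u + v) ^+ 2 = enorm u ^+ 2 + 2 * dotv u v + enorm v ^+ 2.
  rewrite !enorm_sq /dotv mulr_sumr -!big_split; apply: eq_bigr => i _ /=.
  rewrite !mxE; ring.
rewrite e; have := CS u v; rewrite ler_norml => /andP[_ h].
rewrite sqrrD; lra.
Qed.

Lemma enormN v : enorm (- v) = enorm v.
Proof. by rewrite /enorm; congr Num.sqrt; apply: eq_bigr => i _; rewrite mxE sqrrN. Qed.

Lemma enormB u v : enorm (u - v) = enorm (v - u).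
Proof. by rewrite -enormN opprB. Qed.

Lemma enormZ (c : R) v : enorm (c *: v) = `|c| * enorm v.
Proof.
rewrite /enorm -sqrtr_sqr -sqrtrM ?sqr_ge0 //; congr Num.sqrt.
by rewrite mulr_sumr; apply: eq_bigr => i _; rewrite mxE exprMn.
Qed.

Lemma enorm0 : enorm (0 : 'rV[R]_n) = 0.
Proof. by rewrite /enorm big1 ?sqrtr0 // => i _; rewrite mxE expr0n. Qed.

Lemma coord_le_enorm v i : `|v 0 i| <= enorm v.
Proof.
rewrite -ler_sqr ?nnegrE ?enorm_ge0 // real_normK ?num_real // enorm_sq.
rewrite (bigD1 i) //= lerDl; apply: sumr_ge0 => j _; exact: sqr_ge0.
Qed.

Lemma mxnorm_le_enorm v : `|v| <= enorm v.
Proof.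
rewrite [`|v|]mx_normrE; apply: bigmax_le; first exact: enorm_ge0.
by move=> [i j] _ /=; rewrite (ord1 i); exact: coord_le_enorm.
Qed.

Lemma enorm_le_mxnorm v : enorm v <= n%:R * `|v|.
Proof.
have c : forall i, `|v 0 i| <= `|v|.
  move=> i; rewrite [`|v|]mx_normrE.
  exact: (le_bigmax 0 (fun ij : 'I_1 * 'I_n => `|v ij.1 ij.2|) (0, i)).
have Hn : 0 <= n%:R * `|v| :> R by rewrite mulr_ge0.
rewrite -ler_sqr ?nnegrE ?enorm_ge0 // enorm_sq.
apply: (@le_trans _ _ (\sum_(i < n) `|v| ^+ 2)).
  apply: ler_sum => i _; rewrite -real_normK ?num_real //.
  by rewrite ler_sqr ?nnegrE //.
rewrite sumr_const card_ord exprMn -[_ *+ n]mulr_natl ler_wpM2r ?sqr_ge0 //.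
rewrite -natrX ler_nat; case: (n) => // m.
by rewrite expnS leq_pmulr // expn_gt0.
Qed.

End Enorm.


Section Creep.
Variable R : realType.

Lemma le_eps (x y : R) : (forall e, 0 < e -> x <= y + e) -> x <= y.
Proof. by move=> h; apply/ler_addgt0Pr. Qed.

Lemma creep (G : R -> R) (a b : R) : a <= b -> G a <= 0 ->
  (forall c, a < c <= b -> forall e, 0 < e -> exists2 d, 0 < d &
      forall u, a <= u -> c - d < u -> u < c -> G c <= G u + e) ->
  (forall c, a <= c < b -> exists2 d, 0 < d &
      forall h, 0 < h -> h < d -> c + h <= b -> G (c + h) <= G c) ->
  G b <= 0.
Proof.
move=> ab Ga lsc rloc.
pose S := [set t | a <= t <= b /\ forall u, a <= u <= t -> G u <= 0].
have Sa : S a.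
  split; first by rewrite lexx ab.
  by move=> u /andP[h1 h2]; have -> : u = a by apply/eqP; rewrite eq_le h1 h2.
have hs : has_sup S by split; [exists a | exists b => t [/andP[_ ]]].
set c := sup S.
have ac : a <= c by apply: sup_upper_bound.
have cb : c <= b by apply: ge_sup; [exists a | move=> t [/andP[_ ]]].
have below : forall u, a <= u -> u < c -> G u <= 0.
  move=> u au uc.
  have cu0 : 0 < c - u by rewrite subr_gt0.
  have [t St ut] := sup_adherent cu0 hs.
  have {}ut : u < t by move: ut; rewrite /c; lra.
  by case: St => _; apply; rewrite au ltW.
have Gc : G c <= 0.
  have [ea|ac'] := eqVneq a c; first by rewrite -ea.
  have ac2 : a < c by rewrite lt_neqAle ac' ac.
  apply: le_eps => e e0; rewrite add0r.
  have [d d0 hd] := lsc c (ltac:(by rewrite ac2 cb)) e e0.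
  pose u := Num.max a (c - d / 2).
  have au : a <= u by rewrite le_max lexx.
  have uc : u < c by rewrite gt_max ac2 /=; lra.
  have cdu : c - d < u by rewrite lt_max; apply/orP; right; lra.
  apply: (le_trans (hd u au cdu uc)).
  have := below u au uc; lra.
have Sc : S c.
  split; first by rewrite ac cb.
  move=> u /andP[au uc]; have [->//|uc'] := eqVneq u c.
  by apply: below => //; rewrite lt_neqAle uc' uc.
have [cb'|] := ltP c b; last first.
  by move=> bc; have -> : b = c by apply/eqP; rewrite eq_le bc cb.
have [d d0 hd] := rloc c (ltac:(by rewrite ac cb')).
pose t := Num.min (c + d / 2) b.
have ct : c < t by rewrite lt_min cb' andbT; lra.
have St : S t.
  split; first by rewrite (le_trans ac (ltW ct)) ge_min lexx orbT.
  move=> u /andP[au ut]; have [uc|cu] := leP u c.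
    by case: Sc => _; apply; rewrite au uc.
  have -> : u = c + (u - c) by ring.
  apply: (le_trans _ Gc); apply: hd; first by rewrite subr_gt0.
    move: ut; rewrite le_min => /andP[h _]; lra.
  move: ut; rewrite le_min => /andP[_ h]; lra.
have := sup_upper_bound hs St; rewrite -/c => tc.
by move: ct; rewrite ltNge tc.
Qed.

End Creep.


Section MVI.
Variable R : realType.
Local Notation mu := (@lebesgue_measure R).

Lemma small_open (N : set R) (eps : R) : mu.-negligible N -> 0 < eps ->
  exists U : set R, [/\ open U, N `<=` U & (mu U < eps%:E)%E].
Proof.
move=> [D [mD D0 ND]] e0.
have muD : (mu D < +oo)%E by rewrite D0 ltry.
have [U [oU DU hU]] := lebesgue_regularity_outer mD muD e0.
exists U; split => //; first exact: subset_trans DU.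
have mU : measurable U by exact: measurable_realfun.open_measurable.
have h0 : (mu (U `&` D) <= 0)%E.
  rewrite -D0 le_measure ?inE //; exact: measurableI.
apply: le_lt_trans hU.
apply: (@le_trans _ _ (mu (U `\` D) + mu (U `&` D))%E).
  by rewrite le_eqVlt; apply/orP; left; apply/eqP; exact: measureDI.
by apply: (@le_trans _ _ (mu (U `\` D) + 0)%E); [apply: leeD2l | rewrite adde0].
Qed.

Lemma mvi (phi : R -> R) (a b M L : R) (N : set R) :
  a <= b -> 0 <= M -> 0 <= L ->
  mu.-negligible N ->
  (forall t, a <= t <= b -> forall e, 0 < e -> exists2 d, 0 < d &
      forall s, a <= s <= b -> `|s - t| < d -> `|phi s - phi t| < e) ->
  (forall t, a <= t < b -> exists2 d, 0 < d &
      forall h, 0 < h -> h < d -> t + h <= b -> phi (t + h) - phi t <= L * h) ->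
  (forall t, a <= t < b -> ~ N t -> forall e, 0 < e -> exists2 d, 0 < d &
      forall h, 0 < h -> h < d -> t + h <= b -> phi (t + h) - phi t <= (M + e) * h) ->
  phi b - phi a <= M * (b - a).
Proof.
move=> ab M0 L0 negN cont lip der.
apply: le_eps => e e0.
pose eps := e / (2 * (b - a) + L + 1).
have den0 : 0 < 2 * (b - a) + L + 1 by lra.
have eps0 : 0 < eps by rewrite divr_gt0.
have epsE : eps * (2 * (b - a) + L + 1) = e by rewrite /eps mulfVK // gt_eqF.
have [U [oU NU muU]] := small_open negN eps0.
have mU : measurable U by exact: measurable_realfun.open_measurable.
pose m t := mu (U `&` `[a, t]).
have mm : forall t, measurable (U `&` `[a, t] : set (measurableTypeR R)).
  by move=> t; apply: measurableI; [exact: measurable_realfun.open_measurable | exact: measurable_itv].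
have m0 : forall t, (0 <= m t)%E by move=> t; exact: measure_ge0.
have mle : forall t, (m t <= mu U)%E.
  move=> t; rewrite le_measure ?inE //; exact: mm.
have mfin : forall t, m t \is a fin_num.
  move=> t; rewrite ge0_fin_numE // (le_lt_trans (mle t)) //.
  exact: (lt_le_trans muU (leey _)).
pose F t := fine (m t).
have Fle : forall t, F t <= eps.
  move=> t; rewrite -lee_fin /F fineK //; exact: le_trans (mle t) (ltW muU).
have F0 : forall t, 0 <= F t by move=> t; rewrite /F fine_ge0.
have Fmono : forall s t, s <= t -> F s <= F t.
  move=> s t st; rewrite /F fine_le // le_measure ?inE ?mm //.
  apply: setIS => x /=; rewrite !in_itv /= => /andP[-> xs] /=.
  exact: le_trans xs st.
have Fjump : forall c h, a <= c -> 0 < h -> `]c, c + h]%classic `<=` U ->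
    F c + h <= F (c + h).
  move=> c h ac h0 sub; rewrite -lee_fin EFinD /F !fineK //.
  have -> : m (c + h) = mu ((U `&` `[a, c]) `|` `]c, c + h]%classic).
    congr (mu _); apply/seteqP; split => x /=.
      rewrite !in_itv /= => -[Ux /andP[ax xch]].
      by have [xc|cx] := leP x c; [left; split => //; rewrite ax | right; rewrite xch].
    rewrite !in_itv /=.
    case=> [[Ux /andP[ax xc]]| /andP[cx xch]]; split => //.
      rewrite ax /=; lra.
      by apply: sub; rewrite /= in_itv /= cx xch.
    rewrite (le_trans ac (ltW cx)) /=; lra.
  have E1 : mu ((U `&` `[a, c]) `|` `]c, c + h]%classic) =
      (mu (U `&` `[a, c]) + mu (`]c, (c + h)%R]%classic))%E.
    apply: measureU; [exact: mm | exact: measurable_itv |].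
    rewrite -subset0 => x [[_ /=]]; rewrite !in_itv /= => /andP[_ xc] /andP[cx _].
    by move: xc; rewrite leNgt cx.
  have E2 : mu (`]c, c + h]%classic) = h%:E.
    rewrite lebesgue_measure_itv /= lte_fin ltrDl h0 -EFinD; congr EFin; ring.
  by rewrite E1 E2.
pose G t := phi t - phi a - (M + 2 * eps) * (t - a) - L * F t.
have GB : G b <= 0.
  apply: (@creep R G a b ab).
  - rewrite /G; have := F0 a; have : 0 <= L * F a by apply: mulr_ge0. lra.
  - move=> c /andP[ac cb] e' e'0.
    have [d d0 hd] := cont c (ltac:(by rewrite (ltW ac) cb)) e' e'0.
    exists d => // u au cdu uc.
    have := hd u (ltac:(by rewrite au (le_trans (ltW uc) cb))) (ltac:(by rewrite ltr_distlC; apply/andP; split; lra)).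
    rewrite ltr_norml => /andP[h1 h2].
    have := Fmono u c (ltW uc).
    rewrite /G => hF.
    have hM : 0 <= (M + 2 * eps) * (c - u) by apply: mulr_ge0; lra.
    have : L * F u <= L * F c by apply: ler_wpM2l.
    lra.
  - move=> c /andP[ac cb].
    have [Nc|nNc] := pselect (N c).
      have [r /= r0 hr] : exists2 r : R, 0 < r & ball c r `<=` U.
        by move: (oU c (NU c Nc)) => /nbhs_ballP [r r0 hr]; exists r.
      have [d d0 hd] := lip c (ltac:(by rewrite ac cb)).
      exists (Num.min d r); first by rewrite lt_min d0 r0.
      move=> h h0; rewrite lt_min => /andP[hd' hr'] chb.
      have := hd h h0 hd' chb.
      have : F c + h <= F (c + h).
        apply: Fjump => // x /=; rewrite in_itv /= => /andP[cx xch].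
        apply: hr; rewrite /ball /= ltr_distlC; apply/andP; split; lra.
      rewrite /G => hF hp.
      have : L * (F c + h) <= L * F (c + h) by apply: ler_wpM2l.
      have : 0 <= (M + 2 * eps) * h by apply: mulr_ge0; lra.
      nra.
    have [d d0 hd] := der c (ltac:(by rewrite ac cb)) nNc eps eps0.
    exists d => // h h0 hdd chb.
    have := hd h h0 hdd chb.
    have := Fmono c (c + h) (ltac:(lra)).
    rewrite /G => hF hp.
    have : L * F c <= L * F (c + h) by apply: ler_wpM2l.
    have : 0 <= eps * h by apply: mulr_ge0; lra.
    nra.
move: GB; rewrite /G => GB.
have := Fle b; have := F0 b => h1 h2.
have : L * F b <= L * eps by apply: ler_wpM2l.
have : 2 * eps * (b - a) + L * eps <= e.
  rewrite -epsE; have : 0 <= eps by lra. nra.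
nra.
Qed.

End MVI.


Section PolyLen.
Variables (R : realType) (n : nat).

Lemma poly_len_rcons (g : R -> 'rV[R]_n) a s v :
  poly_len g a (rcons s v) = poly_len g a s + enorm (g v - g (last a s)).
Proof.
elim: s a => [|t s ih] a /=; first by rewrite addr0 add0r.
by rewrite ih addrA.
Qed.

Lemma poly_len_ge0 (g : R -> 'rV[R]_n) a s : 0 <= poly_len g a s.
Proof. by elim: s a => [|t s ih] a //=; apply: addr_ge0 => //; exact: enorm_ge0. Qed.

Lemma itv_partition_rcons (a u v : R) s : u < v ->
  itv_partition a u s -> itv_partition a v (rcons s v).
Proof.
move=> uv [ps /eqP ls]; split; first by rewrite rcons_path ps ls.
by rewrite last_rcons.
Qed.

End PolyLen.

Section Reparam.
Variables (R : realType) (n : nat) (g : R -> 'rV[R]_n) (a b L : R).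
Hypothesis ab : a <= b.
Hypothesis gc : cont_on_itv g a b.
Hypothesis glen : forall s, itv_partition a b s -> poly_len g a s <= L.

Definition PS t := [set poly_len g a s | s in [set s | itv_partition a t s]].
Definition sig t := sup (PS t).

Lemma PS_bound t : a <= t <= b -> forall s, itv_partition a t s -> poly_len g a s <= L.
Proof.
move=> /andP[aT tb] s hs.
have [tb'|] := ltP t b.
  apply: le_trans (glen (itv_partition_rcons tb' hs)).
  by rewrite poly_len_rcons lerDl; exact: enorm_ge0.
move=> bt; have tbe : t = b by apply/eqP; rewrite eq_le tb bt.
by apply: glen; rewrite -tbe.
Qed.

Lemma PS_nonempty t : a <= t -> exists s, itv_partition a t s.
Proof.
move=> aT; have [ae|aT'] := eqVneq a t.
  by exists [::]; split => //; rewrite ae.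
by exists [:: t]; apply: itv_partition1; rewrite lt_neqAle aT' aT.
Qed.

Lemma PS_has_sup t : a <= t <= b -> has_sup (PS t).
Proof.
move=> h; split.
  by have [s hs] := PS_nonempty (proj1 (andP h)); exists (poly_len g a s), s.
by exists L => _ [s hs <-]; exact: (PS_bound h hs).
Qed.

Lemma sig_ub t s : a <= t <= b -> itv_partition a t s -> poly_len g a s <= sig t.
Proof. by move=> h hs; apply: sup_upper_bound; [exact: PS_has_sup | exists s]. Qed.

Lemma sig_ge0 t : a <= t <= b -> 0 <= sig t.
Proof.
move=> h; have [s hs] := PS_nonempty (proj1 (andP h)).
exact: le_trans (poly_len_ge0 _ _ _) (sig_ub h hs).
Qed.

Lemma sig_le_L t : a <= t <= b -> sig t <= L.
Proof.
move=> h; apply: ge_sup.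
  by have [s hs] := PS_nonempty (proj1 (andP h)); exists (poly_len g a s), s.
by move=> _ [s hs <-]; exact: (PS_bound h hs).
Qed.

Lemma sig_super u v : a <= u -> u < v -> v <= b ->
  sig u + enorm (g v - g u) <= sig v.
Proof.
move=> au uv vb.
have hu : a <= u <= b by rewrite au (le_trans (ltW uv) vb).
have hv : a <= v <= b by rewrite (le_trans au (ltW uv)) vb.
rewrite -lerBrDr; apply: ge_sup.
  by have [s hs] := PS_nonempty au; exists (poly_len g a s), s.
move=> _ [s hs <-]; rewrite lerBrDr.
have := sig_ub hv (itv_partition_rcons uv hs).
by rewrite poly_len_rcons; case: hs => _ /eqP ->.
Qed.

Lemma sig_mono u v : a <= u -> u <= v -> v <= b -> sig u <= sig v.
Proof.
move=> au uv vb; have [->//|uv'] := eqVneq u v.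
have uv2 : u < v by rewrite lt_neqAle uv' uv.
have := sig_super au uv2 vb.
have := enorm_ge0 (g v - g u); lra.
Qed.

Lemma key_est t1 t2 s1 s2 : a <= t1 -> t1 < t2 -> t2 <= b ->
  (forall u, t1 < u -> u <= b -> s1 <= sig u) ->
  (forall v, a <= v -> v < t2 -> sig v <= s2) ->
  enorm (g t2 - g t1) <= s2 - s1.
Proof.
move=> a1 t12 t2b h1 h2.
apply: le_eps => e e0.
have e20 : 0 < e / 2 by rewrite divr_gt0.
have h1i : a <= t1 <= b by rewrite a1 (le_trans (ltW t12) t2b).
have h2i : a <= t2 <= b by rewrite (le_trans a1 (ltW t12)) t2b.
have [d1 d10 hd1] := gc h1i e20.
have [d2 d20 hd2] := gc h2i e20.
pose dl := Num.min (Num.min d1 d2) (t2 - t1) / 3.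
have dl0 : 0 < dl by rewrite divr_gt0 // !lt_min d10 d20 subr_gt0 t12.
have dl1 : dl <= d1 / 3 by rewrite ler_pM2r // ?invr_gt0 // !ge_min lexx.
have dl2 : dl <= d2 / 3 by rewrite ler_pM2r // ?invr_gt0 // !ge_min lexx orbT.
have dl3 : dl <= (t2 - t1) / 3 by rewrite ler_pM2r // ?invr_gt0 // !ge_min lexx orbT.
clearbody dl.
have uv : t1 + dl < t2 - dl by lra.
have Hu1 : a <= t1 + dl <= b by apply/andP; split; lra.
have Hu2 : `|t1 + dl - t1| < d1 by rewrite addrAC subrr add0r gtr0_norm //; lra.
have Hv1 : a <= t2 - dl <= b by apply/andP; split; lra.
have Hv2 : `|t2 - dl - t2| < d2 by rewrite addrAC subrr add0r normrN gtr0_norm //; lra.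
have Hu := hd1 _ Hu1 Hu2.
have Hv := hd2 _ Hv1 Hv2.
have Hau : a <= t1 + dl by lra.
have Hvb : t2 - dl <= b by lra.
have Huv := sig_super Hau uv Hvb.
have Hs1 := h1 (t1 + dl) (ltac:(lra)) (ltac:(lra)).
have Hs2 := h2 (t2 - dl) (ltac:(lra)) (ltac:(lra)).
have -> : g t2 - g t1 = (g t2 - g (t2 - dl)) + (g (t2 - dl) - g (t1 + dl)) + (g (t1 + dl) - g t1).
  by rewrite -!addrA !addKr.
apply: le_trans (enormD _ _) _.
apply: le_trans (lerD (enormD _ _) (lexx _)) _.
rewrite enormB in Hv.
move: Hu Hv Huv Hs1 Hs2; clear.
set A := enorm _; set B := enorm _; set C := enorm _.
move=> *; lra.
Qed.

Definition tau s := sup [set t | a <= t <= b /\ (t = a \/ sig t <= s)].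

Lemma tau_has_sup s : has_sup [set t | a <= t <= b /\ (t = a \/ sig t <= s)].
Proof.
split; first by exists a; split; [rewrite lexx ab | left].
by exists b => t [/andP[_ ]].
Qed.

Lemma tau_itv s : a <= tau s <= b.
Proof.
apply/andP; split.
  by apply: sup_upper_bound; [exact: tau_has_sup | split; [rewrite lexx ab | left]].
apply: ge_sup; first by exists a; split; [rewrite lexx ab | left].
by move=> t [/andP[_ ]].
Qed.

Lemma tau_mono s1 s2 : s1 <= s2 -> tau s1 <= tau s2.
Proof.
move=> s12; apply: ge_sup; first by exists a; split; [rewrite lexx ab | left].
move=> t [h [->|hs]]; apply: sup_upper_bound; try exact: tau_has_sup.
  by split; [rewrite lexx ab | left].
by split => //; right; exact: le_trans s12.
Qed.

Lemma tau_right s u : tau s < u -> u <= b -> s <= sig u.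
Proof.
move=> tu ub; rewrite leNgt; apply/negP => us.
have au : a <= u by move: (tau_itv s) => /andP[h _]; exact: le_trans h (ltW tu).
have inS : [set t | a <= t <= b /\ (t = a \/ sig t <= s)] u.
  by split; [rewrite au ub | right; exact: ltW].
have := sup_upper_bound (tau_has_sup s) inS.
by rewrite -/(tau s) leNgt tu.
Qed.

Lemma tau_left s v : a <= v -> v < tau s -> sig v <= s.
Proof.
move=> av vt.
have e0 : 0 < tau s - v by rewrite subr_gt0.
have [t [/andP[aT tb] ht] lt] := sup_adherent e0 (tau_has_sup s).
have vt' : v < t by move: lt; rewrite /tau; lra.
case: ht => [ta|hs]; first by move: vt'; rewrite ta ltNge av.
exact: le_trans (sig_mono av (ltW vt') tb) hs.
Qed.

Lemma tau_lip s1 s2 : 0 <= s1 -> s1 <= s2 ->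
  enorm (g (tau s2) - g (tau s1)) <= s2 - s1.
Proof.
move=> s10 s12.
have [e|ne] := eqVneq (tau s1) (tau s2).
  by rewrite e subrr enorm0 subr_ge0.
have lt : tau s1 < tau s2 by rewrite lt_neqAle ne tau_mono.
apply: key_est => //.
- by case/andP: (tau_itv s1).
- by case/andP: (tau_itv s2).
- by move=> u h1 h2; exact: tau_right h1 h2.
- by move=> v h1 h2; exact: tau_left h1 h2.
Qed.

Lemma tau_start s : 0 <= s -> enorm (g (tau s) - g a) <= s.
Proof.
move=> s0.
have [e|ne] := eqVneq a (tau s); first by rewrite -e subrr enorm0.
have lt : a < tau s by rewrite lt_neqAle ne; case/andP: (tau_itv s).
have tb : tau s <= b by case/andP: (tau_itv s).
apply: le_trans (key_est (s1 := 0) (s2 := s) (lexx a) lt tb _ _) _.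
- move=> u h1 h2; apply: sig_ge0; rewrite h2 andbT; exact: ltW.
- by move=> v h1 h2; exact: tau_left h1 h2.
- by rewrite subr0.
Qed.

Lemma tau_end : tau (sig b) = b.
Proof.
apply/eqP; rewrite eq_le; case/andP: (tau_itv (sig b)) => _ -> /=.
by apply: sup_upper_bound; [exact: tau_has_sup | split; [rewrite ab lexx | right]].
Qed.

End Reparam.


Section Bounded.
Variables (R : realType) (n : nat).
Implicit Types (E : set 'rV[R]_n) (x w : 'rV[R]_n).

Lemma ball_enorm (c w : 'rV[R]_n) (r : R) : ball c (r / n.+1%:R) w -> 0 < r -> enorm (w - c) < r.
Proof.
rewrite -ball_normE /ball_ /= => h r0.
have n0 : 0 < n.+1%:R :> R by rewrite ltr0n.
apply: le_lt_trans (enorm_le_mxnorm _) _.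
rewrite -normrN opprB.
apply: (@le_lt_trans _ _ (n.+1%:R * `|c - w|)).
  by rewrite ler_wpM2r // ler_nat.
by rewrite mulrC -ltr_pdivlMr.
Qed.

Lemma closed_enorm_ball x r : closed [set w | enorm (x - w) <= r].
Proof.
move=> p clp /=; rewrite leNgt; apply/negP => hp.
pose rho := (enorm (x - p) - r).
have rho0 : 0 < rho by rewrite subr_gt0.
have [q [/= hq bq]] := clp _ (nbhsx_ballx p (rho / n.+1%:R) (ltac:(by rewrite divr_gt0 // ltr0n))).
have := ball_enorm bq rho0.
have := enormD (x - q) (q - p).
rewrite addrA subrK => h1 h2.
rewrite /rho in h2; lra.
Qed.

Lemma cont_bounded E A x r : closed E -> cont_on E A -> E x -> 0 <= r ->
  has_sup [set enorm (A w - A x) | w in [set w | E w /\ enorm (x - w) <= r]].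
Proof.
move=> cE cA Ex r0.
set K := [set w | E w /\ enorm (x - w) <= r].
split; first by exists 0, x => //; [split => //; rewrite subrr enorm0 | rewrite subrr enorm0].
have Kcl : closed K.
  by apply: closedI => //; exact: closed_enorm_ball.
have Kbd : bounded_set K.
  rewrite /= /bounded_near; near=> M => w [_ hw] /=.
  have : `|w| <= `|x| + r.
    have -> : w = x - (x - w) by rewrite opprB addrC subrK.
    apply: le_trans (ler_normB _ _) _; rewrite lerD2l.
    exact: le_trans (mxnorm_le_enorm _) hw.
  move=> h; apply: le_trans h _.
  near: M; apply: nbhs_pinfty_ge; exact: num_real.
have Kco : compact K by exact: bounded_closed_compact.
pose P w := [set d : R | 0 < d /\ forall w', E w' -> enorm (w' - w) < d -> enorm (A w' - A w) < 1].
pose rad w := get (P w).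
have radP : forall w, E w -> P w (rad w).
  move=> w Ew; apply: getPex; have [d d0 hd] := cA w Ew 1 ltr01.
  by exists d.
move: Kco; rewrite compact_cover => /(_ _ K (fun w => ball w (rad w / n.+1%:R))).
case.
- by move=> i _; exact: ball_open.
- move=> w Kw; exists w => //; apply: ballxx.
  by rewrite divr_gt0 ?ltr0n //; case: (radP w (proj1 Kw)).
move=> D' D'K Kcov.
exists (\big[Num.max/0]_(i <- finmap.enum_fset D') enorm (A i - A x) + 1) => _ [w Kw <-].
have [i Di bi] := Kcov w Kw.
have : i \in K by exact: D'K.
rewrite in_setE => Ki.
have [ri0 hri] := radP i (proj1 Ki).
have := hri w (proj1 Kw) (ball_enorm bi ri0).
have := enormD (A w - A i) (A i - A x); rewrite addrA subrK.
have : enorm (A i - A x) <= \big[Num.max/0]_(i <- finmap.enum_fset D') enorm (A i - A x).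
  by apply: (le_bigmax_seq 0 i xpredT (fun i => enorm (A i - A x))).
lra.
Unshelve. all: by end_near.
Qed.

End Bounded.


Section Lip.
Variable R : realType.

Definition lipon (phi : R -> R) (K al be : R) := forall s u, al <= s <= be -> al <= u <= be ->
  `|phi s - phi u| <= K * `|s - u|.

Lemma lipon_sub phi K al be al' be' : al <= al' -> be' <= be -> lipon phi K al be -> lipon phi K al' be'.
Proof.
move=> h1 h2 h s u /andP[s1 s2] /andP[u1 u2]; apply: h; apply/andP; split; lra.
Qed.

Lemma lipon_chain phi K1 K2 al m be : al <= m <= be -> 0 <= K1 -> 0 <= K2 ->
  lipon phi K1 al m -> lipon phi K2 m be -> lipon phi (K1 + K2) al be.
Proof.
move=> /andP[am mb] K10 K20 h1 h2.
have main : forall s u, al <= s <= be -> al <= u <= be -> s <= u ->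
    `|phi s - phi u| <= (K1 + K2) * `|s - u|.
  move=> s u /andP[s1 s2] /andP[u1 u2] su.
  have hsu : 0 <= `|s - u| by [].
  have [um|mu] := leP u m.
    apply: le_trans (h1 s u _ _) _; first (by apply/andP; split; lra); first (by apply/andP; split; lra).
    by rewrite ler_wpM2r // lerDl.
  have [sm|ms] := leP s m; last first.
    apply: le_trans (h2 s u _ _) _; first (by apply/andP; split; lra); first (by apply/andP; split; lra).
    by rewrite ler_wpM2r // lerDr.
  have e1 := h1 s m (ltac:(apply/andP; split; lra)) (ltac:(apply/andP; split; lra)).
  have e2 := h2 m u (ltac:(apply/andP; split; lra)) (ltac:(apply/andP; split; lra)).
  have t := ler_normD (phi s - phi m) (phi m - phi u).
  rewrite addrA subrK in t.
  have a1 : `|s - m| = m - s by rewrite distrC ger0_norm // subr_ge0.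
  have a2 : `|m - u| = u - m by rewrite distrC ger0_norm // subr_ge0; lra.
  have a3 : `|s - u| = u - s by rewrite distrC ger0_norm // subr_ge0.
  rewrite a1 in e1; rewrite a2 in e2; rewrite a3.
  have : K1 * (m - s) <= K1 * (u - s) by apply: ler_wpM2l => //; lra.
  have : K2 * (u - m) <= K2 * (u - s) by apply: ler_wpM2l => //; lra.
  nra.
move=> s u hs hu; have [su|us] := leP s u; first exact: main.
by rewrite distrC [`|s - u|]distrC; apply: main => //; exact: ltW.
Qed.

Lemma real_ind (P : R -> Prop) (a b : R) : a <= b -> P a ->
  (forall c, a < c <= b -> (forall u, a <= u -> u < c -> P u) -> P c) ->
  (forall c, a <= c < b -> P c -> exists2 d, 0 < d & forall u, c < u -> u < c + d -> u <= b -> P u) ->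
  (forall u v, a <= u -> u <= v -> P v -> P u) ->
  P b.
Proof.
move=> ab Pa lft rgt mono.
pose S := [set t | a <= t <= b /\ P t].
have Sa : S a by split => //; rewrite lexx ab.
have hs : has_sup S by split; [exists a | exists b => t [/andP[_ ]]].
set c := sup S.
have ac : a <= c by apply: sup_upper_bound.
have cb : c <= b by apply: ge_sup; [exists a | move=> t [/andP[_ ]]].
have below : forall u, a <= u -> u < c -> P u.
  move=> u au uc.
  have cu0 : 0 < c - u by rewrite subr_gt0.
  have [t [/andP[_ tb] Pt] ut] := sup_adherent cu0 hs.
  apply: (mono u t au) => //; move: ut; rewrite /c; lra.
have Pc : P c.
  have [ea|ac'] := eqVneq a c; first by rewrite -ea.
  by apply: lft => //; rewrite lt_neqAle ac' ac cb.
have [cb'|] := ltP c b; last first.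
  by move=> bc; have <- : c = b by apply/eqP; rewrite eq_le bc cb.
have [d d0 hd] := rgt c (ltac:(by rewrite ac cb')) Pc.
pose t := Num.min (c + d / 2) b.
have ct : c < t by rewrite lt_min cb' andbT; lra.
have St : S t.
  split; first by rewrite (le_trans ac (ltW ct)) ge_min lexx orbT.
  have t1 : t <= c + d / 2 by rewrite ge_min lexx.
  have t2 : t <= b by rewrite ge_min lexx orbT.
  apply: hd => //; lra.
have := sup_upper_bound hs St; rewrite -/c => tc.
by move: ct; rewrite ltNge tc.
Qed.

Lemma global_lip (phi : R -> R) (a b : R) : a <= b ->
  (forall t, a <= t <= b -> exists2 d, 0 < d & exists2 K, 0 <= K &
     forall s u, a <= s <= b -> a <= u <= b -> `|s - t| < d -> `|u - t| < d ->
       `|phi s - phi u| <= K * `|s - u|) ->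
  exists2 K, 0 <= K & lipon phi K a b.
Proof.
move=> ab loc.
apply: (@real_ind (fun c => exists2 K, 0 <= K & lipon phi K a c) a b ab).
- exists 0 => // s u /andP[s1 s2] /andP[u1 u2].
  have -> : s = a by apply/eqP; rewrite eq_le s2 s1.
  have -> : u = a by apply/eqP; rewrite eq_le u2 u1.
  by rewrite subrr normr0 mul0r.
- move=> c /andP[ac cb] IH.
  have [d d0 [Kc Kc0 hc]] := loc c (ltac:(by rewrite (ltW ac) cb)).
  pose m := Num.max a (c - d / 2).
  have lc : lipon phi Kc m c.
    move=> s u /andP[s1 s2] /andP[u1 u2].
    have am : a <= m by rewrite le_max lexx.
    have cdm : c - d / 2 <= m by rewrite le_max lexx orbT.
    apply: hc.
    - apply/andP; split; lra.
    - apply/andP; split; lra.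
    - rewrite distrC ger0_norm ?subr_ge0 //; lra.
    - rewrite distrC ger0_norm ?subr_ge0 //; lra.
  have [ma|ma] := eqVneq m a; first by exists Kc => //; rewrite -ma.
  have am : a < m by rewrite lt_neqAle eq_sym ma le_max lexx.
  have mc : m < c by rewrite gt_max ac /=; lra.
  have [K1 K10 h1] := IH m (ltW am) mc.
  exists (K1 + Kc); first exact: addr_ge0.
  by apply: (@lipon_chain phi K1 Kc a m c) => //; rewrite (ltW am) (ltW mc).
- move=> c /andP[ac cb] [K1 K10 h1].
  have [d d0 [Kc Kc0 hc]] := loc c (ltac:(by rewrite ac (ltW cb))).
  exists (d / 2); first by rewrite divr_gt0.
  move=> u cu ud ub.
  exists (K1 + Kc); first exact: addr_ge0.
  apply: (@lipon_chain phi K1 Kc a c u) => //; first by rewrite ac (ltW cu).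
  move=> s v /andP[s1 s2] /andP[v1 v2]; apply: hc.
  - apply/andP; split; lra.
  - apply/andP; split; lra.
  - rewrite ger0_norm ?subr_ge0 //; lra.
  - rewrite ger0_norm ?subr_ge0 //; lra.
- move=> u v au uv [K K0 h]; exists K => //.
  by apply: lipon_sub h.
Qed.

End Lip.


Section Deriv.
Variables (R : realType) (V : normedModType R).

Lemma deriv_eps (p : R -> V) t : derivable p t 1 ->
  forall e, 0 < e -> exists2 d, 0 < d & forall h, 0 < h -> h < d ->
    `|p (t + h) - p t - h *: derive1 p t| <= e * h.
Proof.
move=> dp e e0.
have cv : (h^-1 *: ((p \o shift t) (h *: 1) - p t)) @[h --> 0^'] --> 'D_1 p t.
  exact: dp.
move/cvgrPdist_lt: cv => /(_ e e0).
rewrite /= near_withinE => /nbhs_ballP [d d0 hd].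
exists d => // h h0 hd'.
have bh : ball 0 d h by rewrite /ball /= sub0r normrN gtr0_norm.
have := hd h bh (lt0r_neq0 h0).
rewrite -derive1E /= /shift.
have -> : h *: (1 : R) = h by rewrite /GRing.scale /= mulr1.
move=> H; apply: ltW.
have hn : `|h| = h by rewrite gtr0_norm.
have -> : p (t + h) - p t - h *: derive1 p t = - (h *: (derive1 p t - h^-1 *: (p (h + t) - p t))).
  rewrite scalerBr scalerA mulfV ?gt_eqF // scale1r [h + t]addrC opprB.
  by rewrite addrC.
by rewrite normrN normrZ hn mulrC ltr_pM2r.
Qed.

End Deriv.

Unset Implicit Arguments.

Theorem mainTheorem2 (R : realType) (n : nat) (E : set 'rV[R]_n) (k : R)
  (A : 'rV[R]_n -> 'rV[R]_n) (f : 'rV[R]_n -> R) :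
  closed E ->
  1 <= k ->
  (forall x y, E x -> E y -> joined_by_path E x y (k * enorm (x - y))) ->
  cont_on E A ->
  loc_lipschitz_on E f ->
  (forall (I : interval R) (p : R -> 'rV[R]_n),
      (forall t, [set` I] t -> E (p t)) ->
      loc_lipschitz_path [set` I] p ->
      {ae (@lebesgue_measure R), forall t, [set` I] t ->
         [/\ derivable (f \o p) t 1, derivable p t 1 &
             derive1 (f \o p) t = dotv (A (p t)) (derive1 p t)]}) ->
  forall x y, E x -> E y ->
    `|f y - f x - dotv (A x) (y - x)| <=
      k * enorm (x - y) *
      sup [set enorm (A w - A x) | w in
             [set w | E w /\ enorm (x - w) <= k * enorm (x - y)]].
Proof.
move=> cE k1 paths cA lfE hyp x y Ex Ey.
have L0 : 0 <= k * enorm (x - y) by apply: mulr_ge0; [lra | exact: enorm_ge0].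
have hS := cont_bounded cE cA Ex L0.
set L := k * enorm (x - y) in L0 hS *.
set S := [set enorm (A w - A x) | w in [set w | E w /\ enorm (x - w) <= L]] in hS *.
set M := sup S.
have M0 : 0 <= M.
  apply: sup_upper_bound => //; exists x; last by rewrite subrr enorm0.
  by split => //; rewrite subrr enorm0.
have Mb : forall w, E w -> enorm (x - w) <= L -> enorm (A w - A x) <= M.
  by move=> w Ew hw; apply: sup_upper_bound => //; exists w.
have [a [b [g [ab gax [gby gE] gc glen]]]] := paths x y Ex Ey.
have glen' : forall s, itv_partition a b s -> poly_len g a s <= L.
  move=> s hs; rewrite -lee_fin; apply: le_trans glen.
  by apply: ereal_sup_ubound; exists s.
set l := sig g a b.
have l0 : 0 <= l by apply: (sig_ge0 glen'); rewrite ab lexx.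
have lL : l <= L by apply: (sig_le_L glen'); rewrite ab lexx.
pose p s := g (tau g a b s).
have pE : forall s, E (p s) by move=> s; apply: gE; exact: tau_itv.
have plip : forall s1 s2, 0 <= s1 -> s1 <= s2 -> enorm (p s2 - p s1) <= s2 - s1.
  by move=> s1 s2 h1 h2; exact: (tau_lip ab gc glen').
have p0 : p 0 = x.
  have := tau_start ab gc glen' (lexx 0); rewrite -/(p 0) gax => h.
  have : `|p 0 - x| <= 0 by apply: le_trans (mxnorm_le_enorm _) h.
  by rewrite normr_le0 subr_eq0 => /eqP.
have pl : p l = y by rewrite /p /l tau_end.
have plip2 : forall s u, 0 <= s -> 0 <= u -> enorm (p s - p u) <= `|s - u|.
  move=> s u s0 u0; have [us|su] := leP u s.
    by rewrite ger0_norm ?subr_ge0 //; exact: plip.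
  by rewrite enormB distrC gtr0_norm ?subr_gt0 //; apply: plip => //; exact: ltW.
have pdist : forall t, 0 <= t <= l -> enorm (x - p t) <= L.
  move=> t /andP[t0 tl]; rewrite -p0 enormB.
  apply: le_trans (plip2 _ _ t0 (lexx 0)) _; rewrite subr0 ger0_norm //; lra.
pose phi t := f (p t) - dotv (A x) (p t).
have locl : forall t, 0 <= t <= l -> exists2 d, 0 < d & exists2 K, 0 <= K &
     forall s u, 0 <= s <= l -> 0 <= u <= l -> `|s - t| < d -> `|u - t| < d ->
       `|phi s - phi u| <= K * `|s - u|.
  move=> t /andP[t0 tl].
  have [d d0 [Lf hLf]] := lfE (p t) (pE t).
  exists d => //; exists (`|Lf| + enorm (A x)); first by rewrite addr_ge0 ?enorm_ge0.
  move=> s u /andP[s0 sl] /andP[u0 ul] sd ud.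
  have hs : enorm (p s - p t) < d by apply: le_lt_trans (plip2 _ _ s0 t0) sd.
  have hu : enorm (p u - p t) < d by apply: le_lt_trans (plip2 _ _ u0 t0) ud.
  have h1 := hLf _ _ (pE s) (pE u) hs hu.
  have h2 := CS (A x) (p s - p u).
  have h3 := plip2 _ _ s0 u0.
  have e : phi s - phi u = (f (p s) - f (p u)) - dotv (A x) (p s - p u).
    by rewrite /phi dotvBr; ring.
  rewrite e; apply: le_trans (ler_normB _ _) _.
  have h4 : Lf * enorm (p s - p u) <= `|Lf| * `|s - u|.
    apply: le_trans (ler_wpM2r (enorm_ge0 _) (ler_norm Lf)) _.
    by apply: ler_wpM2l.
  have h5 : enorm (A x) * enorm (p s - p u) <= enorm (A x) * `|s - u|.
    by apply: ler_wpM2l => //; exact: enorm_ge0.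
  rewrite mulrDl; lra.
have [Kg Kg0 lipg] := global_lip l0 locl.
have contphi : forall (sg : R), (sg = 1 \/ sg = -1) -> forall t, 0 <= t <= l -> forall e, 0 < e -> exists2 d, 0 < d &
      forall s, 0 <= s <= l -> `|s - t| < d -> `|sg * phi s - sg * phi t| < e.
  move=> sg hsg t ht e e0; exists (e / (Kg + 1)); first by rewrite divr_gt0 //; lra.
  move=> s hs hst.
  have -> : `|sg * phi s - sg * phi t| = `|phi s - phi t|.
    by case: hsg => ->; rewrite ?mul1r // -mulrBr normrM normrN normr1 mul1r.
  apply: le_lt_trans (lipg _ _ hs ht) _.
  have : `|s - t| * (Kg + 1) < e by rewrite -ltr_pdivlMr //; lra.
  have : 0 <= `|s - t| by [].
  nra.
have rlip : forall (sg : R), (sg = 1 \/ sg = -1) -> forall t, 0 <= t < l -> exists2 d, 0 < d &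
      forall h, 0 < h -> h < d -> t + h <= l -> sg * phi (t + h) - sg * phi t <= Kg * h.
  move=> sg hsg t /andP[t0 tl]; exists 1 => // h h0 _ thl.
  have := lipg (t + h) t (ltac:(apply/andP; split; lra)) (ltac:(apply/andP; split; lra)).
  have -> : `|t + h - t| = h by rewrite addrAC subrr add0r gtr0_norm.
  case: hsg => -> h1; rewrite ?mul1r; first by apply: le_trans (ler_norm _) h1.
  rewrite !mulN1r opprK addrC; apply: le_trans (ler_norm _) _; rewrite distrC; exact: h1.
pose I : interval R := `[0, l].
have pEI : forall t, [set` I] t -> E (p t) by move=> t _; exact: pE.
have plocI : loc_lipschitz_path [set` I] p.
  move=> t _; exists 1 => //; exists 1 => s u; rewrite /= !in_itv /= => /andP[s0 _] /andP[u0 _] _ _.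
  by rewrite mul1r; exact: plip2.
have [N [mN N0 sN]] := hyp I p pEI plocI.
have deriv : forall t, 0 <= t < l -> ~ N t -> forall e, 0 < e -> exists2 d, 0 < d &
   forall h, 0 < h -> h < d -> t + h <= l -> `|phi (t + h) - phi t| <= (M + e) * h.
  move=> t /andP[t0 tl] nNt e e0.
  have tI : [set` I] t by rewrite /= in_itv /= t0 (ltW tl).
  have Pt : [set` I] t -> [/\ derivable (f \o p) t 1, derivable p t 1 &
             derive1 (f \o p) t = dotv (A (p t)) (derive1 p t)].
    by apply: contrapT => hP; apply: nNt; apply: sN.
  have [dF dp eqD] := Pt tI.
  have c0 : 0 <= enorm (A x) by exact: enorm_ge0.
  set c := enorm (A x) in c0 *.
  pose e1 := e / 3.
  pose e2 := e / (3 * (n%:R + 1) * (M + c + 1)).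
  have e10 : 0 < e1 by rewrite divr_gt0.
  have n0 : 0 <= n%:R :> R by [].
  have e20 : 0 < e2 by rewrite divr_gt0 // !mulr_gt0 //; lra.
  have key : e1 + n%:R * e2 * (M + c) <= e.
    have : n%:R * e2 * (M + c) <= (n%:R + 1) * e2 * (M + c + 1).
      have : 0 <= e2 * (M + c) by apply: mulr_ge0; lra.
      have : 0 <= e2 by lra.
      nra.
    have -> : (n%:R + 1) * e2 * (M + c + 1) = e / 3.
      rewrite /e2; field; apply/andP; split; apply: lt0r_neq0; lra.
    rewrite /e1; lra.
  have [d1 d10 hd1] := deriv_eps dF e10.
  have [d2 d20 hd2] := deriv_eps dp e20.
  exists (Num.min d1 d2); first by rewrite lt_min d10 d20.
  move=> h h0; rewrite lt_min => /andP[hd1' hd2'] thl.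
  set P' := derive1 p t in eqD.
  have a1 : `|f (p (t + h)) - f (p t) - h * dotv (A (p t)) P'| <= e1 * h.
    by have := hd1 h h0 hd1'; rewrite eqD.
  have a2 := hd2 h h0 hd2'.
  set Dp := p (t + h) - p t - h *: P' in a2.
  have a2' : enorm Dp <= n%:R * (e2 * h).
    exact: le_trans (enorm_le_mxnorm _) (ler_wpM2l n0 a2).
  have a3 : enorm (p (t + h) - p t) <= h.
    by have := plip t (t + h) t0 (ltac:(lra)); rewrite addrAC subrr add0r.
  have a4 : enorm P' <= 1 + n%:R * e2.
    have : h * enorm P' <= h + n%:R * (e2 * h).
      have -> : h * enorm P' = enorm (h *: P') by rewrite enormZ gtr0_norm.
      have -> : h *: P' = (p (t + h) - p t) - Dp by rewrite /Dp opprB addrC subrK.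
      apply: le_trans (enormD _ _) _; rewrite enormN; lra.
    move=> hh; rewrite -(ler_pM2l h0) mulrDr mulr1; lra.
  have a5 : `|dotv (A (p t) - A x) P'| <= M * (1 + n%:R * e2).
    apply: le_trans (CS _ _) _.
    apply: le_trans (ler_wpM2r (enorm_ge0 _) (Mb _ (pE t) (pdist t _))) _.
      by rewrite t0 ltW.
    by apply: ler_wpM2l.
  have a6 : `|dotv (A x) Dp| <= c * (n%:R * (e2 * h)).
    by apply: le_trans (CS _ _) _; apply: ler_wpM2l.
  have eq : phi (t + h) - phi t = (f (p (t + h)) - f (p t) - h * dotv (A (p t)) P')
      + h * dotv (A (p t) - A x) P' - dotv (A x) Dp.
    rewrite /phi /Dp !dotvBr dotvBl dotvZr; ring.
  rewrite eq.
  apply: le_trans (ler_normB _ _) _.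
  apply: le_trans (lerD (ler_normD _ _) (lexx _)) _.
  rewrite normrM gtr0_norm //.
  have : h * `|dotv (A (p t) - A x) P'| <= h * (M * (1 + n%:R * e2)) by apply: ler_wpM2l => //; lra.
  have : 0 <= h by lra.
  nra.
have negN : (@lebesgue_measure R).-negligible N by exists N; split.
have hmvi : forall sg : R, sg = 1 \/ sg = -1 -> sg * phi l - sg * phi 0 <= M * (l - 0).
  move=> sg hsg.
  apply: (@mvi R (fun t => sg * phi t) 0 l M Kg N l0 M0 Kg0 negN (contphi sg hsg) (rlip sg hsg)).
  move=> t ht nNt e e0; have [d d0 hd] := deriv t ht nNt e e0.
  exists d => // h h0 hd' thl; apply: le_trans (hd h h0 hd' thl).
  rewrite -mulrBr; case: hsg => ->; rewrite ?mul1r ?mulN1r; first exact: ler_norm.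
  by rewrite -normrN; exact: ler_norm.
have h1 := hmvi 1 (or_introl erefl).
have h2 := hmvi (-1) (or_intror erefl).
have eqf : f y - f x - dotv (A x) (y - x) = phi l - phi 0.
  by rewrite /phi pl p0 dotvBr; ring.
rewrite eqf ler_norml; apply/andP; split.
- have : M * l <= L * M by rewrite mulrC; apply: ler_wpM2r.
  rewrite subr0 in h2; lra.
- have : M * l <= L * M by rewrite mulrC; apply: ler_wpM2r.
  rewrite subr0 in h1; lra.
Qed.
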